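(* For the semi-discretization described below, choose $$f^\rho=\{\{\rho\}\}_{\log}\{\{v\}\},\qquad f^{\rho v}=\{\{v\}\}f^\rho+\{\{p\}\},\qquad f^{\rho e}=\frac{1}{\gamma-1}\frac{f^\rho}{\{\{\rho/p\}\}_{\log}}+\{\{v\}\}\{\{p\}\},\qquad v^{\mathrm{num}}=\{\{v\}\},$$ and any consistent $\rho^{\mathrm{num}}$. Then the semi-discretization is entropy-conservative for the entropy pair $U=-\rho s$, $F=-\rho sv$ with $s=\log(p/\rho^\gamma)$. If in addition $\rho^{\mathrm{num}}=\{\{\rho\}\}_{\log}$, the semi-discretization also conserves the total energy $\rho e+\tfrac12\rho v^2+\rho\phi$ (entropy-conservative for the pair $(\rho e+\tfrac12\rho v^2+\rho\phi,\ (\rho e+\tfrac12\rho v^2+\rho\phi+p)v)$).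
   Context: Let $\gamma>1$. States $(\rho,\rho v,\rho e)$ with $\rho>0$, $p=(\gamma-1)\rho e>0$, $v=\rho v/\rho$, and a time-independent gravity potential $\phi_i$ attached to each cell (treated as an extra state component). The scheme is $\partial_t\rho_i+\frac{f^\rho_{i+1/2}-f^\rho_{i-1/2}}{\Delta x}=0$, $\partial_t(\rho v)_i+\frac{f^{\rho v}_{i+1/2}-f^{\rho v}_{i-1/2}}{\Delta x}+\frac{\rho^{\mathrm{num}}_{i+1/2}[\![\phi]\!]_{i+1/2}+\rho^{\mathrm{num}}_{i-1/2}[\![\phi]\!]_{i-1/2}}{2\Delta x}=0$, $\partial_t(\rho e)_i+\frac{f^{\rho e}_{i+1/2}-f^{\rho e}_{i-1/2}}{\Delta x}-\frac{v^{\mathrm{num}}_{i+1/2}[\![p]\!]_{i+1/2}+v^{\mathrm{num}}_{i-1/2}[\![p]\!]_{i-1/2}}{2\Delta x}=0$, with subscript $i+1/2$ meaning evaluation at $(u_i,u_{i+1})$. Notation: $\{\{a\}\}=\tfrac12(a_-+a_+)$, $[\![a]\!]=a_+-a_-$, and for positive $a$ the logarithmic mean $\{\{a\}\}_{\log}=[\![a]\!]/[\![\log a]\!]$ if $a_-\ne a_+$ and $=a_-$ otherwise. Entropy-conservative for $(U,F)$ means: there exists a two-point $F^{\mathrm{num}}$ with $F^{\mathrm{num}}(u,u)=F(u)$ such that for all grid states and all $i$, $U'(u_i)\cdot\partial_tu_i=-\frac{1}{\Delta x}(F^{\mathrm{num}}(u_i,u_{i+1})-F^{\mathrm{num}}(u_{i-1},u_i))$,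 where $U'$ is the gradient with respect to $(\rho,\rho v,\rho e)$ (with $\phi$ held fixed). *)

(* Defs.v *)
From Stdlib Require Import Reals ZArith.
From Coquelicot Require Import Coquelicot.
Open Scope R_scope.

(* A cell state: (rho, rho v, rho e) plus the time-independent potential phi. *)
Record st := mkSt { rho : R; mom : R; ien : R; phi : R }.

Definition vel (u : st) : R := mom u / rho u.
Definition pres (g : R) (u : st) : R := (g - 1) * ien u.
Definition adm (g : R) (u : st) : Prop := 0 < rho u /\ 0 < pres g u.

Definition avg (a b : R) : R := (a + b) / 2.
Definition jump (a b : R) : R := b - a.
Definition logmean (a b : R) : R :=
  if Req_EM_T a b then a else (b - a) / (ln b - ln a).

(* Generic semi-discretization: right-hand side (d_t rho, d_t rho v, d_t rho e)
   of cell i, given u_{i-1}, u_i, u_{i+1}, numerical fluxes and rho^num, v^num. *)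
Definition rhs (g dx : R)
  (frho fmom fene rhonum vnum : st -> st -> R) (um ui up : st) : R * R * R :=
  ( - (frho ui up - frho um ui) / dx,
    - (fmom ui up - fmom um ui) / dx
      - (rhonum ui up * jump (phi ui) (phi up) + rhonum um ui * jump (phi um) (phi ui)) / (2 * dx),
    - (fene ui up - fene um ui) / dx
      + (vnum ui up * jump (pres g ui) (pres g up) + vnum um ui * jump (pres g um) (pres g ui)) / (2 * dx)).

Definition gradU (U : R -> R -> R -> R -> R) (u : st) : R * R * R :=
  ( Derive (fun x => U x (mom u) (ien u) (phi u)) (rho u),
    Derive (fun x => U (rho u) x (ien u) (phi u)) (mom u),
    Derive (fun x => U (rho u) (mom u) x (phi u)) (ien u)).

Definition dot3 (a b : R * R * R) : R :=
  let '(a1, a2, a3) := a in let '(b1, b2, b3) := b in a1 * b1 + a2 * b2 + a3 * b3.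

Definition entropy_conservative (g dx : R) (U : R -> R -> R -> R -> R) (F : st -> R)
  (frho fmom fene rhonum vnum : st -> st -> R) : Prop :=
  exists Fnum : st -> st -> R,
    (forall u, adm g u -> Fnum u u = F u) /\
    forall u : Z -> st, (forall j, adm g (u j)) -> forall i : Z,
      dot3 (gradU U (u i))
           (rhs g dx frho fmom fene rhonum vnum (u (i - 1)%Z) (u i) (u (i + 1)%Z))
      = - (Fnum (u i) (u (i + 1)%Z) - Fnum (u (i - 1)%Z) (u i)) / dx.

Definition frhoEC (g : R) (uL uR : st) : R :=
  logmean (rho uL) (rho uR) * avg (vel uL) (vel uR).
Definition fmomEC (g : R) (uL uR : st) : R :=
  avg (vel uL) (vel uR) * frhoEC g uL uR + avg (pres g uL) (pres g uR).
Definition feneEC (g : R) (uL uR : st) : R :=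
  1 / (g - 1) * frhoEC g uL uR / logmean (rho uL / pres g uL) (rho uR / pres g uR)
  + avg (vel uL) (vel uR) * avg (pres g uL) (pres g uR).
Definition vnumEC (uL uR : st) : R := avg (vel uL) (vel uR).

(* Entropy pair: U = - rho s, F = - rho s v, s = log (p / rho^gamma), p = (gamma-1) rho e *)
Definition entU (g : R) (r m E ph : R) : R := - r * ln ((g - 1) * E / Rpower r g).
Definition entF (g : R) (u : st) : R :=
  entU g (rho u) (mom u) (ien u) (phi u) * vel u.

Definition totU (r m E ph : R) : R := E + / 2 * r * (m / r) ^ 2 + r * ph.
Definition totF (g : R) (u : st) : R :=
  (totU (rho u) (mom u) (ien u) (phi u) + pres g u) * vel u.

Definition consistent_rhonum (g : R) (rn : st -> st -> R) : Prop :=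
  forall u, adm g u -> rn u u = rho u.

(* Main.v *)
Require Import Defs.
From Stdlib Require Import Reals ZArith Lra.
From Coquelicot Require Import Coquelicot.
Open Scope R_scope.

Definition sE g u := ln (pres g u) - g * ln (rho u).

Lemma grad_ent g u : 1 < g -> adm g u ->
  gradU (entU g) u = (g - sE g u, 0, - (g - 1) * (rho u / pres g u)).
Proof.
intros hg [hr hp]. unfold pres in *.
assert (hE : 0 < ien u) by (apply (Rmult_lt_reg_l (g-1)); lra).
unfold gradU, entU. f_equal; [f_equal|].
- apply is_derive_unique.
  assert (H: is_derive (fun x => - x * ln ((g - 1) * ien u / Rpower x g)) (rho u)
    (g - ln ((g-1)*ien u/Rpower (rho u) g))).
  { unfold Rpower. pose proof (exp_pos (g * ln (rho u))).
    auto_derive.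
    - repeat split; try lra. apply Rmult_lt_0_compat; [lra|apply Rinv_0_lt_compat; lra].
    - unfold Rdiv. field. repeat split; lra. }
  replace (g - sE g u) with (g - ln ((g - 1) * ien u / Rpower (rho u) g)); [exact H|].
  unfold sE, pres. rewrite ln_div; [|lra|apply exp_pos].
  unfold Rpower. rewrite ln_exp. ring.
- apply Derive_const.
- apply is_derive_unique. unfold Rpower. pose proof (exp_pos (g * ln (rho u))).
  auto_derive.
  + repeat split; try lra. apply Rmult_lt_0_compat; [nra|apply Rinv_0_lt_compat; lra].
  + field. repeat split; lra.
Qed.

Lemma grad_tot u : 0 < rho u ->
  gradU totU u = (phi u - / 2 * vel u ^ 2, vel u, 1).
Proof.
intros hr. unfold gradU, totU, vel. f_equal; [f_equal|].
- apply is_derive_unique. auto_derive; [lra|]. field. lra.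
- apply is_derive_unique. auto_derive; [lra|]. field. lra.
- apply is_derive_unique. auto_derive; [lra|]. ring.
Qed.

Lemma lm_pos a b : 0 < a -> 0 < b -> 0 < logmean a b /\ ln b = ln a + (b - a) / logmean a b.
Proof.
intros ha hb. unfold logmean. destruct (Req_EM_T a b) as [e|ne].
- subst. split; [lra|]. unfold Rdiv. ring.
- assert (hd : ln b - ln a <> 0).
  { intro h. apply ne. apply ln_inv; auto; lra. }
  split.
  + destruct (Rlt_or_le a b) as [h|h].
    * assert (ln a < ln b) by (apply ln_increasing; auto).
      apply Rdiv_lt_0_compat; lra.
    * assert (b < a) by lra. assert (ln b < ln a) by (apply ln_increasing; auto).
      replace ((b - a) / (ln b - ln a)) with ((a - b) / (ln a - ln b)) by (field; lra).
      apply Rdiv_lt_0_compat; lra.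
  + field. split; auto. intro h. apply ne. lra.
Qed.

Lemma iface_ent g L Q : 1 < g -> adm g L -> adm g Q ->
  (g - sE g Q) * frhoEC g L Q - (g-1)*(rho Q/pres g Q)*(feneEC g L Q + vnumEC L Q * jump (pres g L) (pres g Q)/2)
  = (g - sE g L) * frhoEC g L Q - (g-1)*(rho L/pres g L)*(feneEC g L Q - vnumEC L Q * jump (pres g L) (pres g Q)/2).
Proof.
intros hg [hrL hpL] [hrR hpR].
unfold feneEC, frhoEC, vnumEC, jump, sE.
destruct (lm_pos (rho L) (rho Q) hrL hrR) as [h1 e1].
assert (hbL : 0 < rho L / pres g L) by (apply Rdiv_lt_0_compat; auto).
assert (hbR : 0 < rho Q / pres g Q) by (apply Rdiv_lt_0_compat; auto).
destruct (lm_pos _ _ hbL hbR) as [h2 e2].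
rewrite !ln_div in e2 by auto.
assert (ep : ln (pres g Q) = ln (rho Q) - (ln (pres g L) + (ln (rho L) - ln (pres g L) + (rho Q / pres g Q - rho L / pres g L) /
        logmean (rho L / pres g L) (rho Q / pres g Q) - ln (pres g L))))
  by lra.
rewrite ep, e1.
set (a := logmean (rho L) (rho Q)) in *.
set (b := logmean (rho L / pres g L) (rho Q / pres g Q)) in *.
unfold avg. field. repeat split; lra.
Qed.

Lemma lm_same a : logmean a a = a.
Proof. unfold logmean. destruct (Req_EM_T a a); [auto|congruence]. Qed.

Definition Fent g L Q := (g - sE g Q) * frhoEC g L Q - (g-1)*(rho Q/pres g Q)*(feneEC g L Q + vnumEC L Q * jump (pres g L) (pres g Q)/2).

Definition Ftot g L Q := (phi Q - /2 * vel Q ^ 2) * frhoEC g L Q + vel Q * fmomEC g L Q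
  - vel Q * logmean (rho L) (rho Q) * jump (phi L) (phi Q) / 2 + feneEC g L Q
  + vnumEC L Q * jump (pres g L) (pres g Q) / 2 - vel Q * pres g Q.

Lemma iface_tot g L Q : Ftot g L Q =
  (phi L - /2 * vel L ^ 2) * frhoEC g L Q + vel L * fmomEC g L Q
  + vel L * logmean (rho L) (rho Q) * jump (phi L) (phi Q) / 2 + feneEC g L Q
  - vnumEC L Q * jump (pres g L) (pres g Q) / 2 - vel L * pres g L.
Proof.
unfold Ftot, fmomEC, frhoEC, vnumEC, jump, avg. field.
Qed.

Lemma ent_ln g u : 1 < g -> adm g u ->
  ln ((g - 1) * ien u / Rpower (rho u) g) = sE g u.
Proof.
intros hg [hr hp]. unfold sE, pres in *. rewrite ln_div; [|lra|apply exp_pos].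
unfold Rpower. rewrite ln_exp. ring.
Qed.

Theorem mainTheorem12 (g dx : R) (hg : 1 < g) (hdx : 0 < dx) :
  (forall rhonum : st -> st -> R, consistent_rhonum g rhonum ->
     entropy_conservative g dx (entU g) (entF g)
       (frhoEC g) (fmomEC g) (feneEC g) rhonum vnumEC) /\
  entropy_conservative g dx totU (totF g)
    (frhoEC g) (fmomEC g) (feneEC g)
    (fun uL uR => logmean (rho uL) (rho uR)) vnumEC.
Proof.
split.
- intros rn _. exists (Fent g). split.
  + intros u hu. pose proof hu as [hr hp].
    unfold Fent, entF, entU, feneEC, frhoEC, vnumEC, jump, avg.
    rewrite !lm_same, ent_ln by auto. unfold vel, pres in *.
    assert (ien u <> 0) by (intro h; rewrite h in hp; lra). field. repeat split; lra.
  + intros u hu i.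
    rewrite grad_ent by auto.
    replace (Fent g (u i) (u (i+1)%Z)) with
      ((g - sE g (u i)) * frhoEC g (u i) (u (i+1)%Z) - (g-1)*(rho (u i)/pres g (u i))*(feneEC g (u i) (u (i+1)%Z) - vnumEC (u i) (u (i+1)%Z) * jump (pres g (u i)) (pres g (u (i+1)%Z))/2))
      by (unfold Fent; symmetry; apply iface_ent; auto).
    destruct (hu i) as [_ hpi]. unfold Fent, rhs, dot3. field. lra.
- exists (Ftot g). split.
  + intros u [hr hp].
    unfold Ftot, totF, totU, fmomEC, feneEC, frhoEC, vnumEC, jump, avg.
    rewrite !lm_same. unfold vel, pres in *.
    assert (ien u <> 0) by (intro h; rewrite h in hp; lra). field. repeat split; lra.
  + intros u hu i.
    rewrite grad_tot by (apply hu).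
    rewrite (iface_tot g (u i)).
    unfold Ftot, rhs, dot3. field. lra.
Qed.
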